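(* For all integers $d_1,d_2\geq3$, $R_{d_1,d_2}(W_{d_1}\otimes W_{d_2})\leq 2d_1+2d_2-1$.
   Context: Identify $S^d\mathbb{C}^2$ with binary forms of degree $d$ in a basis $\{x,y\}$; $W_d=x^{d-1}y$. The partially symmetric rank $R_{d_1,d_2}(T)$ of $T\in S^{d_1}\mathbb{C}^2\otimes S^{d_2}\mathbb{C}^2$ is the minimal $r$ such that $T=\sum_{i=1}^r v_{i,1}^{\otimes d_1}\otimes v_{i,2}^{\otimes d_2}$ with $v_{i,j}\in\mathbb{C}^2$. *)

(* Defs.v *)
From mathcomp Require Import all_boot all_order all_algebra.
Set Implicit Arguments. Unset Strict Implicit. Unset Printing Implicit Defensive.
Import GRing.Theory Num.Theory.
Local Open Scope ring_scope.

(* Tensors in (C^2)^{(x) d1} (x) (C^2)^{(x) d2}, given by their entries in the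
   basis {e_0 = x, e_1 = y}: an entry is indexed by a choice of basis index
   for each of the d1 + d2 tensor factors. *)

Definition tpow (C : nzRingType) (d : nat) (v : 'I_2 -> C) (f : 'I_d -> 'I_2) : C :=
  \prod_(j < d) v (f j).

(* The symmetric tensor W_d corresponding to the binary form x^{d-1} y
   (the W-state sum_j x^{(x)(j)} (x) y (x) x^{(x)(d-1-j)}, i.e. d times the
   symmetrization of x^{d-1} y; the nonzero scalar is irrelevant for rank). *)
Definition Wd (C : nzRingType) (d : nat) (f : 'I_d -> 'I_2) : C :=
  if #|[set j | f j == ord_max]| == 1%N then 1 else 0.

Definition ps_decomp (C : nzRingType) (d1 d2 r : nat)
    (T : ('I_d1 -> 'I_2) -> ('I_d2 -> 'I_2) -> C)
    (a b : 'I_r -> 'I_2 -> C) : Prop :=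
  forall (f : 'I_d1 -> 'I_2) (g : 'I_d2 -> 'I_2),
    T f g = \sum_(i < r) tpow (a i) f * tpow (b i) g.

Definition ps_rank_le (C : nzRingType) (d1 d2 : nat)
    (T : ('I_d1 -> 'I_2) -> ('I_d2 -> 'I_2) -> C) (n : nat) : Prop :=
  exists r : nat, (r <= n)%N /\ exists a b : 'I_r -> 'I_2 -> C, ps_decomp T a b.

Definition WW (C : nzRingType) (d1 d2 : nat) : ('I_d1 -> 'I_2) -> ('I_d2 -> 'I_2) -> C := fun (f : 'I_d1 -> 'I_2) (g : 'I_d2 -> 'I_2) =>
  Wd C f * Wd C g.
Arguments WW C d1 d2 f g : clear implicits.
Arguments ps_rank_le {C d1 d2} T n.

(* Main.v *)
Require Import Defs.
From mathcomp Require Import all_boot all_order all_algebra all_solvable all_field.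
From mathcomp Require Import zify ring.
Set Implicit Arguments. Unset Strict Implicit. Unset Printing Implicit Defensive.
Import GRing.Theory Num.Theory.
Local Open Scope ring_scope.

Lemma prim_root_ex (C : numClosedFieldType) n : (n > 0)%N -> exists z : C, n.-primitive_root z.
Proof.
pose p : {poly C} := 'X^n - 1; have [r Dp] := closed_field_poly_normal p.
move=> n_gt0; rewrite (monicP _) ?monicXnsubC // scale1r in Dp.
have rn1: all n.-unity_root r by apply/allP=> z; rewrite -root_prod_XsubC -Dp.
have sz_r: (n < (size r).+1)%N.
  by rewrite -(size_prod_XsubC r id) -Dp size_XnsubC.
have [|z] := hasP (has_prim_root n_gt0 rn1 _ sz_r); last by exists z.
by rewrite -separable_prod_XsubC -Dp separable_Xn_sub_1 // pnatr_eq0 -lt0n.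
Qed.

Lemma tpow_sc (C : comNzRingType) d (c w : C) (f : 'I_d -> 'I_2) :
  tpow (fun e : 'I_2 => c * (if e == ord_max then w else 1)) f
  = c ^+ d * w ^+ #|[set j | f j == ord_max]|.
Proof.
rewrite /tpow /= big_split /= prodr_const card_ord; congr (_ * _).
rewrite -big_mkcond /= prodr_const cardsE //.
Qed.

Lemma geom_sum (C : numClosedFieldType) N (z : C) e : N.-primitive_root z ->
  \sum_(i < N) (z ^+ e) ^+ i = if (N %| e)%N then N%:R else 0.
Proof.
move=> pz; case: ifP => hd.
  have -> : z ^+ e = 1 by apply/eqP; rewrite -(prim_order_dvd pz).
  by rewrite (eq_bigr (fun _ => 1)) ?sumr_const ?card_ord // => i _; rewrite expr1n.
have ne1 : z ^+ e - 1 != 0 by rewrite subr_eq0 -(prim_order_dvd pz) hd.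
apply: (mulfI ne1); rewrite -subrX1 mulr0 exprAC (prim_expr_order pz) expr1n subrr //.
Qed.
Theorem proposition3p5 (C : numClosedFieldType) (d1 d2 : nat) :
  (3 <= d1)%N -> (3 <= d2)%N ->
  ps_rank_le (WW C d1 d2) (2 * d1 + 2 * d2 - 1).
Proof.
move=> h1 h2.
pose N := (d1 + d2 - 1)%N.
have N_gt0 : (0 < N)%N by rewrite /N; lia.
have [z pz] := prim_root_ex C N_gt0.
exists (N + N)%N; split; first by rewrite /N; lia.
pose sg (i : nat) : C := if (i < N)%N then 1 else -1.
pose lam (i : nat) : C := sg i * z ^+ (i * (N - 2)) / (N + N)%:R.
exists (fun i e => d1.-root (lam i) * (if e == ord_max then z ^+ i else 1)).
exists (fun i e => 1 * (if e == ord_max then sg i * z ^+ i else 1)).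
move=> f g; rewrite /WW /Wd.
have d1_gt0 : (0 < d1)%N by lia.
have rK := rootCK d1_gt0.
have hk : (#|[set j | f j == ord_max]| <= d1)%N.
  by rewrite -[X in (_ <= X)%N](card_ord d1) max_card.
have hl : (#|[set j | g j == ord_max]| <= d2)%N.
  by rewrite -[X in (_ <= X)%N](card_ord d2) max_card.
move: hk hl.
under eq_bigr => i _ do rewrite !tpow_sc rK expr1n mul1r.
set k := #|[set j | f j == ord_max]|.
set l := #|[set j | g j == ord_max]|.
move=> hk hl.
pose e := (k + l + (N - 2))%N.
have -> : \sum_(i < N + N) lam i * z ^+ i ^+ k * (sg i * z ^+ i) ^+ l
   = (1 + (-1) ^+ l.+1) / (N + N)%:R * \sum_(i < N) (z ^+ e) ^+ i.
  rewrite big_split_ord /=. rewrite -big_split /= mulr_sumr.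
  apply: eq_bigr => i _.
  have hi : (i < N)%N by [].
  rewrite /lam /sg hi ltnNge leq_addr /=.
  rewrite -!exprM !exprMn -!exprM.
  have zNi : forall m, z ^+ ((N + i) * m) = z ^+ (i * m).
    by move=> m; rewrite mulnDl exprD exprM (prim_expr_order pz) expr1n mul1r.
  rewrite !zNi.
  have -> : z ^+ (e * i) = z ^+ (i * (N - 2)) * z ^+ (i * k) * z ^+ (i * l).
    by rewrite -!exprD /e; congr (_ ^+ _); ring.
  rewrite expr1n exprS. ring.
rewrite geom_sum //.
have hdiv : (N %| e)%N = (k + l == 2)%N.
  rewrite /e /N; apply/idP/idP.
    move=> /dvdnP [q hq]; apply/eqP.
    have hN : (5 <= d1 + d2 - 1)%N by lia.
    have hkl : (k + l <= d1 + d2)%N by lia.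
    case: q hq => [|[|q]] hq; [lia|lia|nia].
  move/eqP => ->; have -> : (2 + (d1 + d2 - 1 - 2) = d1 + d2 - 1)%N by lia.
  exact: dvdnn.
rewrite hdiv.
have hN0 : (N + N)%:R != 0 :> C by rewrite pnatr_eq0; lia.
have hN1 : N%:R != 0 :> C by rewrite pnatr_eq0; lia.
clearbody k l.
case: (eqVneq (k + l) 2)%N => hkl.
  have [hl0|[hl0|hl0]] : (l = 0 \/ l = 1 \/ l = 2)%N by lia.
  - have hk2 : k = 2%N by lia.
    by rewrite hk2 hl0 /= expr1 subrr !mul0r.
  - have hk2 : k = 1%N by lia.
    rewrite hk2 hl0 /= natrD mulr1. field. by rewrite -natrD.
  - have hk2 : k = 0%N by lia.
    rewrite hk2 hl0 /=; ring.
rewrite mulr0.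
case: (eqVneq k 1%N) => hk1; last by rewrite mul0r.
case: (eqVneq l 1%N) => hl1; last by rewrite mulr0.
by move: hkl; rewrite hk1 hl1 eqxx.
Qed.
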